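(* Let $s\geq 2$ be an even integer, let $m\geq 3$ be an integer, let $t\geq 1$ be an integer, and let $n$ be an integer with $n\geq \left(\frac{sm}{2}-1\right)(2sm-1)+1$. Then $$R(tP_n,J_{s,m})=tn+\frac{sm}{2}-1.$$
   Context: All graphs are finite and simple. For graphs $G$ and $H$, the Ramsey number $R(G,H)$ is the least natural number $N$ such that for every graph $F$ on $N$ vertices, either $F$ contains $G$ as a subgraph or the complement $\overline{F}$ contains $H$ as a subgraph. $P_n$ denotes the path on $n$ vertices, and $tP_n$ denotes the disjoint union of $t$ copies of $P_n$. For integers $s,m\geq 2$, the generalized Jahangir graph $J_{s,m}$ is the graph on $sm+1$ vertices consisting of a cycle $C_{sm}=v_1v_2\cdots v_{sm}v_1$ together with one additional vertex adjacent to exactly the $m$ cycle vertices $v_1, v_{s+1}, v_{2s+1},\ldots,v_{(m-1)s+1}$ (i.e., $m$ vertices of the cycle at distance $s$ from each other along the cycle). *)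

(* Defs.v *)
From mathcomp Require Import all_boot.
Set Implicit Arguments. Unset Strict Implicit. Unset Printing Implicit Defensive.

Definition simple_graph (V : finType) (e : rel V) : Prop :=
  symmetric e /\ irreflexive e.

Definition complement (V : finType) (e : rel V) : rel V :=
  fun x y => (x != y) && ~~ e x y.

Definition contains_subgraph (W : finType) (F : rel W) (V : finType) (G : rel V) : Prop :=
  exists f : V -> W, injective f /\ forall x y, G x y -> F (f x) (f y).

Definition ramsey_prop (V1 : finType) (G : rel V1) (V2 : finType) (H : rel V2) (N : nat) : Prop :=
  forall F : rel 'I_N, simple_graph F ->
    contains_subgraph F G \/ contains_subgraph (complement F) H.

Definition is_ramsey_number (V1 : finType) (G : rel V1) (V2 : finType) (H : rel V2) (r : nat) : Prop :=
  ramsey_prop G H r /\ forall N, N < r -> ~ ramsey_prop G H N.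

(* t P_n : vertices (i, a), i < t copy index, a < n position on the path. *)
Definition tPn_rel (t n : nat) : rel ('I_t * 'I_n) :=
  fun u v => (u.1 == v.1) &&
             (((val u.2).+1 == val v.2) || ((val v.2).+1 == val u.2)).

(* Generalized Jahangir graph J_{s,m}: cycle v_0 ... v_{sm-1} (0-indexed,
   index i corresponds to v_{i+1}) on Some i, plus hub None adjacent to
   v_i exactly when s divides i, i.e. to v_1, v_{s+1}, ..., v_{(m-1)s+1}. *)
Definition jahangir_rel (s m : nat) : rel (option 'I_(s * m)) :=
  fun u v =>
    match u, v with
    | Some i, Some j => (j == (i.+1 %% (s * m)) :> nat) || (i == (j.+1 %% (s * m)) :> nat)
    | None, Some j => s %| j
    | Some i, None => s %| i
    | None, None => false
    end.
Arguments tPn_rel t n : clear implicits.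
Arguments jahangir_rel s m : clear implicits.

(* Main.v *)
Require Import Defs.
From mathcomp Require Import all_boot zify.
From Stdlib Require Import Classical.
Set Implicit Arguments. Unset Strict Implicit. Unset Printing Implicit Defensive.

Lemma max_exists (P : nat -> Prop) b : (forall l, P l -> l <= b) ->
  forall l0, P l0 -> exists l, P l /\ forall l', P l' -> l' <= l.
Proof.
move=> Hb.
suff: forall d l0, b - l0 <= d -> P l0 -> exists l, P l /\ forall l', P l' -> l' <= l.
  by move=> H l0; apply: (H (b - l0)).
elim=> [|d IH] l0 hd P0.
  exists l0; split=> // l' Pl'; have := Hb _ Pl'; have := Hb _ P0; lia.
case: (classic (exists l', P l' /\ l0 < l')) => [[l' [Pl' lt]]|nex].
  apply: (IH l') => //; have := Hb _ Pl'; lia.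
exists l0; split=> // l' Pl'; case: (leqP l' l0) => // lt; exfalso; apply: nex; by exists l'.
Qed.

Section Core.
Variables (V : finType) (F : rel V).
Hypothesis Fsym : symmetric F.
Hypothesis Firr : irreflexive F.

Definition ispath (D : {set V}) (g : nat -> V) (l : nat) : Prop :=
  (forall a, a < l -> g a \in D) /\
  (forall a b, a < l -> b < l -> g a = g b -> a = b) /\
  (forall a, a.+1 < l -> F (g a) (g a.+1)).

Lemma ispath_le D g l l' : ispath D g l -> l' <= l -> ispath D g l'.
Proof.
rewrite /ispath; move=> [H1 [H2 H3]] le; split; [|split].
- move=> a al; apply: H1; lia.
- move=> a b al bl; apply: H2; lia.
- move=> a al; apply: H3; lia.
Qed.

Lemma ispath_card D g l : ispath D g l -> l <= #|D|.
Proof.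
rewrite /ispath; move=> [H1 [H2 _]].
have inj : injective (fun i : 'I_l => g (val i)).
  by move=> i j /H2 => /(_ (ltn_ord i) (ltn_ord j)) /val_inj.
have := card_imset [set: 'I_l] inj; rewrite cardsT card_ord => <-.
apply: subset_leq_card; apply/subsetP=> x H.
case/imsetP: H => i _ ->.
apply: (H1 _ (ltn_ord i)).
Qed.

Ltac simp_if := repeat match goal with |- context [if ?b then _ else _] =>
  let E := fresh in (have E : b = true by lia) || (have E : b = false by lia);
  rewrite E; clear E end.

Lemma pedge D f l : ispath D f l -> forall a b, a < l -> b < l ->
  (b = a.+1 \/ a = b.+1) -> F (f a) (f b).
Proof.
move=> [_ [_ H3]] a b al bl [e|e]; subst; first by apply: H3.
rewrite Fsym; by apply: H3.
Qed.

Lemma splice D f l w p (h : nat -> nat) : ispath D f l -> w \in D ->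
  (forall a, a < l -> f a <> w) -> p <= l ->
  (forall x, x < l.+1 -> x <> p -> h x < l) ->
  (forall x y, x < l.+1 -> y < l.+1 -> x <> p -> y <> p -> h x = h y -> x = y) ->
  (forall x, x.+1 < l.+1 -> F (if x == p then w else f (h x))
                                 (if x.+1 == p then w else f (h x.+1))) ->
  ispath D (fun x => if x == p then w else f (h x)) l.+1.
Proof.
move=> fp wD fw pl hl hinj adj; have [H1 [H2 _]] := fp.
split; [|split] => //.
- move=> a al; case: eqP => // ap; apply: H1; exact: hl.
- move=> a b al bl; case: eqP => ap; case: eqP => bp.
  + by rewrite ap bp.
  + move=> e; exfalso; apply: (fw (h b)); [exact: hl | by rewrite e].
  + move=> e; exfalso; apply: (fw (h a)); [exact: hl | by rewrite e].
  + move=> e; apply: hinj => //; apply: H2 => //; exact: hl.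
Qed.

Section MaxPath.
Variables (D : {set V}) (f : nat -> V) (l : nat).
Hypothesis fp : ispath D f l.
Hypothesis maxl : forall g l', ispath D g l' -> l' <= l.
Variable w : V.
Hypothesis wD : w \in D.
Hypothesis fw : forall a, a < l -> f a <> w.

Ltac sif := repeat match goal with |- context [if ?b then _ else _] =>
  case: (boolP b) => ? end.

Lemma no_ext : 0 < l -> ~~ F w (f l.-1).
Proof.
move=> l0; apply/negP => Fw.
suff sp : ispath D (fun x => if x == l then w else f (id x)) l.+1.
  by have := maxl sp; rewrite ltnn.
apply: splice => //.
- move=> x xl xp /=; lia.
- move=> x xl /=; sif; try (exfalso; lia); try (apply: (pedge fp); lia).
  have -> : x = l.-1 by lia. by rewrite Fsym.
Qed.

Lemma no_ins i : i.+1 < l -> F w (f i) -> ~~ F w (f i.+1).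
Proof.
move=> il F1; apply/negP => F2.
suff sp : ispath D (fun x => if x == i.+1 then w else
    f ((fun x => if x <= i then x else x.-1) x)) l.+1.
  by have := maxl sp; rewrite ltnn.
apply: splice => //.
- lia.
- move=> x xl xp /=; sif; lia.
- move=> x y xl yl xp yp /=; sif; lia.
- move=> x xl /=; sif; try (exfalso; lia); try (apply: (pedge fp); lia).
  + have -> : x = i.+1 by lia. done.
  + have -> : x = i by lia. by rewrite Fsym.
Qed.

Lemma no_cross i j : i < j -> j.+1 < l -> F w (f i) -> F w (f j) ->
  ~~ F (f i.+1) (f j.+1).
Proof.
move=> ij jl F1 F2; apply/negP => F3.
suff sp : ispath D (fun x => if x == i.+1 then w else
    f ((fun x => if x <= i then x else if x <= j.+1 then i + j + 2 - x else x.-1) x)) l.+1.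
  by have := maxl sp; rewrite ltnn.
apply: splice => //.
- lia.
- move=> x xl xp /=; sif; lia.
- move=> x y xl yl xp yp /=; sif; lia.
- move=> x xl /=; sif; try (exfalso; lia); try (apply: (pedge fp); lia).
  + have -> : i + j + 2 - x.+1 = j by lia. done.
  + have -> : x = i by lia. by rewrite Fsym.
  + have -> : i + j + 2 - x = i.+1 by lia. have -> : x = j.+1 by lia. done.
Qed.

End MaxPath.

Definition XY (k : nat) := exists X Y : {set V}, [disjoint X & Y] /\
  k.+1 <= #|X| /\ k <= #|Y| /\ forall x y, x \in X -> y \in Y -> ~~ F x y.

Lemma sub_card (A : {set V}) a : a <= #|A| -> exists B : {set V}, B \subset A /\ #|B| = a.
Proof.
move=> aA; exists [set x | x \in take a (enum A)]; split.
  by apply/subsetP=> x; rewrite inE => /mem_take; rewrite mem_enum.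
rewrite cardsE (card_uniqP _); last by apply: take_uniq; exact: enum_uniq.
by rewrite size_takel // -cardE.
Qed.

Lemma indep_XY k (I : {set V}) : k.*2.+1 <= #|I| ->
  (forall x y, x \in I -> y \in I -> ~~ F x y) -> XY k.
Proof.
move=> cI ind; have [Y [YI cY]] : exists B : {set V}, B \subset I /\ #|B| = k by apply: sub_card; lia.
exists (I :\: Y), Y; split; [|split; [|split]].
- by rewrite disjoints_subset setDE subsetIr.
- rewrite cardsD (setIidPr YI); lia.
- by rewrite cY.
- move=> x y; rewrite inE => /andP [_ xI] yI; apply: ind => //.
  exact: (subsetP YI).
Qed.

Lemma union_bound (A : {set V}) b (ys : seq V) :
  (forall y, y \in ys -> #|A :&: [set v | F y v]| <= b) ->
  #|A :&: [set v | has (fun y => F y v) ys]| <= size ys * b.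
Proof.
elim: ys => [|y ys IH] hb.
  rewrite mul0n leqn0 cards_eq0; apply/eqP/setP=> v; by rewrite !inE andbF.
have -> : A :&: [set v | has (fun y => F y v) (y :: ys)] =
   (A :&: [set v | F y v]) :|: (A :&: [set v | has (fun y => F y v) ys]).
  by apply/setP=> v; rewrite !inE /= andb_orr.
apply: leq_trans (leq_card_setU _ _) _; rewrite mulSn leq_add //.
  by apply: hb; rewrite inE eqxx.
by apply: IH => z zy; apply: hb; rewrite inE zy orbT.
Qed.


Lemma caseA D f l k : ispath D f l -> (forall g l', ispath D g l' -> l' <= l) ->
  (k * k).*2.+1 <= l -> l + k <= #|D| -> XY k.
Proof.
move=> fp maxl lbig Dbig.
have [H1 [H2 H3]] := fp.
pose Img := [set f (val i) | i : 'I_l].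
have injI : injective (fun i : 'I_l => f (val i)).
  by move=> i j /H2 => /(_ (ltn_ord i) (ltn_ord j)) /val_inj.
have cImg : #|Img| = l by rewrite card_imset // card_ord.
have Img_in : forall a, a < l -> f a \in Img.
  by move=> a al; apply/imsetP; exists (Ordinal al).
pose W := D :\: Img.
have cW : k <= #|W|.
  rewrite cardsD; have := subset_leq_card (subsetIr D Img); lia.
have Wfw : forall w, w \in W -> w \in D /\ forall a, a < l -> f a <> w.
  move=> w; rewrite inE => /andP [nI wD]; split => // a al e.
  by move: nI; rewrite -e Img_in.
pose Nw := fun w => [set i : 'I_l | F w (f (val i))].
have l0 : 0 < l by lia.
case: (classic (exists2 w, w \in W & k.*2 <= #|Nw w|)) => [[w wW cN] | noN].
- have [wD fw] := Wfw w wW.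
  have Nlt : forall i : 'I_l, i \in Nw w -> (val i).+1 < l.
    move=> i; rewrite inE => Fi; rewrite ltn_neqAle ltn_ord andbT; apply/eqP => e.
    have := no_ext fp maxl wD fw l0; have -> : l.-1 = val i by lia.
    by rewrite Fi.
  have NF : forall i : 'I_l, i \in Nw w -> F w (f (val i)) by move=> i; rewrite inE.
  apply: (indep_XY (I := w |: [set f (val i).+1 | i in Nw w])).
  + rewrite cardsU1 card_in_imset.
    * have -> : (w \notin [set f (val i).+1 | i in Nw w]) = true.
        apply/negP => /imsetP [i iN e]; exact: (fw (val i).+1 (Nlt i iN) (esym e)).
      change (k.*2 < 1 + #|Nw w|); lia.
    * move=> i j iN jN /H2 e; apply/val_inj; have := e (Nlt _ iN) (Nlt _ jN); lia.
  + move=> x y; rewrite !inE => /orP [/eqP -> | /imsetP [i iN ->]]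
                               /orP [/eqP -> | /imsetP [j jN ->]].
    * by rewrite Firr.
    * exact: (no_ins fp maxl wD fw (Nlt _ jN) (NF _ jN)).
    * rewrite Fsym; exact: (no_ins fp maxl wD fw (Nlt _ iN) (NF _ iN)).
    * case: (ltngtP (val i) (val j)) => ij.
      - exact: (no_cross fp maxl wD fw ij (Nlt _ jN) (NF _ iN) (NF _ jN)).
      - rewrite Fsym; exact: (no_cross fp maxl wD fw ij (Nlt _ iN) (NF _ jN) (NF _ iN)).
      - by rewrite ij Firr.
- have Nsmall : forall w, w \in W -> #|Nw w| < k.*2.
    move=> w wW; rewrite ltnNge; apply/negP => h; apply: noN; by exists w.
  have [Y [YW cY]] : exists B : {set V}, B \subset W /\ #|B| = k by apply: sub_card.
  pose B0 := [set v | has (fun y => F y v) (enum Y)].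
  exists (Img :\: B0), Y; split; [|split; [|split]].
  + rewrite disjoints_subset; apply/subsetP => v; rewrite !inE => /andP [_ vI].
    apply/negP => vY; have := subsetP YW v vY; by rewrite inE vI.
  + rewrite cardsD cImg.
    have : #|Img :&: B0| <= size (enum Y) * (k.*2.-1).
      apply: union_bound => y; rewrite mem_enum => yY.
      have yW := subsetP YW y yY.
      apply: leq_trans (_ : #|(fun i : 'I_l => f (val i)) @: Nw y| <= _).
        apply: subset_leq_card; apply/subsetP => v; rewrite !inE => /andP [/imsetP [i _ ->] Fi].
        apply/imsetP; exists i => //; by rewrite inE.
      apply: leq_trans (leq_imset_card _ _) _; have := Nsmall y yW; lia.
    rewrite -cardE cY; nia.
  + by rewrite cY.
  + move=> x y; rewrite !inE => /andP [xB _] yY; move: xB; apply: contra => Fxy.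
    apply/hasP; exists y; [by rewrite mem_enum | by rewrite Fsym].
Qed.


Definition Inv D (S U : {set V}) (g : nat -> V) (len : nat) :=
 (ispath D g len /\ U \subset D) /\ [/\ [disjoint S & U],
  (forall a, a < len -> g a \notin S /\ g a \notin U),
  (forall x y, x \in S -> y \in U -> ~~ F x y) &
  #|S| + #|U| + len = #|D| ].

Lemma dfs_step D (k : nat) : forall d (S U : {set V}) (g : nat -> V) len, (#|U|).*2 + len <= d -> Inv D S U g len ->
  #|S| <= k.+1 -> k.+1 <= #|D| ->
  exists S' U' g' len', Inv D S' U' g' len' /\ #|S'| = k.+1.
Proof.
elim=> [|d IH] S U g len hd inv hS hD;
  (case: (eqVneq #|S| k.+1) => [e|ne]; first by exists S, U, g, len).
  case: inv => _ [_ _ _ c]; lia.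
case: inv => [[gp UD] [dSU gSU eSU c]].
have [H1 [H2 H3]] := gp.
case: (posnP len) => [len0 | lenp].
- have : U != set0.
    apply/negP => /eqP U0; move: c; rewrite U0 cards0 len0; lia.
  case/set0Pn => u uU.
  have uD := subsetP UD u uU.
  apply: (IH S (U :\ u) (fun _ => u) 1) => //.
  + move: hd; rewrite (cardsD1 u U) uU len0 /=; lia.
  + split; [split|split].
    * split; [|split].
      - move=> a _; exact: uD.
      - move=> a b a1 b1 _; lia.
      - move=> a; lia.
    * by apply: subset_trans UD; apply: subsetDl.
    * rewrite disjoints_subset; apply: subset_trans (_ : ~: U \subset _).
        by rewrite -disjoints_subset.
      by rewrite setCS subsetDl.
    * move=> a _; split.
        by apply/negP => uS; move: dSU; rewrite disjoint_sym => /disjointFr => /(_ u uU); rewrite uS.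
      by rewrite !inE eqxx.
    * move=> x y xS; rewrite inE => /andP [_ yU]; exact: eSU.
    * move: c; rewrite (cardsD1 u U) uU len0 /=; lia.
- pose v := g len.-1.
  have vn : v \notin S /\ v \notin U by apply: gSU; lia.
  case: (boolP [exists u in U, F v u]) => [/existsP [u /andP [uU Fvu]] | nex].
  + have uD := subsetP UD u uU.
    apply: (IH S (U :\ u) (fun x => if x == len then u else g x) len.+1) => //.
    * move: hd; rewrite (cardsD1 u U) uU /=; lia.
    * split; [split|split].
      -- split; [|split].
         ++ move=> a al; case: eqP => ea //; apply: H1; lia.
         ++ move=> a b al bl; case: eqP => ea; case: eqP => eb.
            ** by rewrite ea eb.
            ** move=> e; have := gSU b (ltac:(lia)); rewrite -e uU; by case.
            ** move=> e; have := gSU a (ltac:(lia)); rewrite e uU; by case.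
            ** apply: H2; lia.
         ++ move=> a al; case: eqP => ea; case: eqP => eb.
            ** lia.
            ** lia.
            ** have -> : a = len.-1 by lia. exact: Fvu.
            ** apply: H3; lia.
      -- by apply: subset_trans UD; apply: subsetDl.
      -- rewrite disjoints_subset; apply: subset_trans (_ : ~: U \subset _).
           by rewrite -disjoints_subset.
         by rewrite setCS subsetDl.
      -- move=> a al; case: eqP => ea.
           split; last by rewrite !inE eqxx.
           by apply/negP => uS; move: dSU; rewrite disjoint_sym => /disjointFr => /(_ u uU); rewrite uS.
         have [h1 h2] := gSU a (ltac:(lia)); split => //; rewrite inE negb_and h2 orbT //.
      -- move=> x y xS; rewrite inE => /andP [_ yU]; exact: eSU.
      -- move: c; rewrite (cardsD1 u U) uU /=; lia.
  + apply: (IH (v |: S) U g len.-1) => //.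
    * lia.
    * split; [split|split] => //.
      -- apply: ispath_le gp _; lia.
      -- rewrite disjoints_subset subUset sub1set inE -disjoints_subset dSU andbT; by case: vn.
      -- move=> a al; have [h1 h2] := gSU a (ltac:(lia)); split => //.
         rewrite !inE negb_or h1 andbT; apply/eqP => e.
         have := H2 a len.-1 (ltac:(lia)) (ltac:(lia)) e; lia.
      -- move=> x y; rewrite !inE => /orP [/eqP -> | xS] yU; last exact: eSU.
         apply/negP => Fy; move/existsP: nex; apply; exists y; by rewrite yU Fy.
      -- rewrite cardsU1; case: vn => -> _; move: c; rewrite /=; lia.
    * rewrite cardsU1; case: vn => -> _ /=; lia.
Qed.


Lemma core (D : {set V}) k n : 3 <= k -> (k - 1) * (4 * k - 1) + 1 <= n -> n + k - 1 <= #|D| ->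
  (exists g, ispath D g n) \/ XY k.
Proof.
move=> k3 hn hD.
case: (classic (exists g, ispath D g n)) => [h|nop]; first by left.
right.
have nolong : forall g l, ispath D g l -> l < n.
  move=> g l gp; rewrite ltnNge; apply/negP => nl; apply: nop; exists g.
  exact: ispath_le gp nl.
have big : (k * k).*2 + k.*2.+1 <= #|D| by nia.
case: (classic (exists g, ispath D g (k * k).*2.+1)) => [[g0 g0p] | nob].
- have [l [[g gp] lmax]] := max_exists (P := fun l => exists g, ispath D g l)
     (b := #|D|) (fun l '(ex_intro g gp) => ispath_card gp) (ex_intro _ g0 g0p).
  apply: (caseA gp).
  + by move=> g' l' g'p; apply: lmax; exists g'.
  + by apply: lmax; exists g0.
  + have := nolong _ _ gp; lia.
- have nob' : forall g l, ispath D g l -> l <= (k * k).*2.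
    move=> g l gp; rewrite leqNgt; apply/negP => bl; apply: nob; exists g.
    exact: ispath_le gp bl.
  have : D != set0 by rewrite -card_gt0; lia.
  case/set0Pn => x0 _.
  have inv0 : Inv D set0 D (fun _ => x0) 0.
    split; split => //.
    * by rewrite disjoints_subset sub0set.
    * by move=> x y; rewrite inE.
    * by rewrite cards0 add0n addn0.
  have [S [U [g [len [[[gp UD] [dSU _ eSU c]] cS]]]]] :=
    @dfs_step D k (#|D|).*2 set0 D (fun _ => x0) 0 ltac:(lia) inv0
      ltac:(by rewrite cards0) ltac:(lia).
  exists S, U; split => //; split; first by rewrite cS.
  split => //; have := nob' _ _ gp; lia.
Qed.

End Core.

Lemma half_lt i k : i < k.*2 -> i./2 < k.
Proof. move=> h; have := odd_double_half i; lia. Qed.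

Lemma J_embed (V : finType) (F : rel V) s m k : symmetric F -> 2 %| s -> s * m = k.*2 ->
  XY F k -> contains_subgraph (complement F) (jahangir_rel s m).
Proof.
move=> Fsym s2 smk [X [Y [dXY [cX [cY nXY]]]]].
have X0 : 0 < #|X| by lia.
have [x0 _] : exists x0, x0 \in X by apply/set0Pn; rewrite -card_gt0.
pose xs := enum X; pose ys := enum Y.
have sxs : size xs = #|X| by rewrite -cardE.
have sys : size ys = #|Y| by rewrite -cardE.
pose f (u : option 'I_(s * m)) := match u with
  | None => nth x0 xs 0
  | Some i => if odd i then nth x0 xs (i./2).+1 else nth x0 ys i./2 end.
pose side (u : option 'I_(s * m)) := match u with None => true | Some i => odd i end.
have ilt : forall i : 'I_(s * m), i./2 < k by move=> i; apply: half_lt; rewrite -smk.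
have fX : forall u, side u -> f u \in X.
  case=> [i|] /= h; last by rewrite -mem_enum mem_nth // sxs; lia.
  rewrite h -mem_enum mem_nth // sxs; have := ilt i; lia.
have fY : forall u, ~~ side u -> f u \in Y.
  case=> [i|] //= h; rewrite (negbTE h) -mem_enum mem_nth // sys; have := ilt i; lia.
have dis : forall x y, x \in X -> y \in Y -> x != y.
  move=> x y xX yY; apply/eqP => e; move: dXY; rewrite disjoint_sym => /disjointFr.
  by move=> /(_ y yY); rewrite -e xX.
exists f; split.
- have oh : forall i : 'I_(s * m), odd i -> (i : nat) = (i./2).*2.+1.
    move=> i oi; have := odd_double_half i; rewrite oi add1n; lia.
  have eh : forall i : 'I_(s * m), ~~ odd i -> (i : nat) = (i./2).*2.
    move=> i oi; have := odd_double_half i; rewrite (negbTE oi) add0n; lia.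
  move=> u v e.
  case: (boolP (side u)) => su; case: (boolP (side v)) => sv.
  + have ux := fX u su; have vx := fX v sv.
    have eq : forall a b, a < #|X| -> b < #|X| -> nth x0 xs a = nth x0 xs b -> a = b.
      move=> a b al bl /eqP; rewrite nth_uniq ?sxs ?enum_uniq //; by move/eqP.
    move: e; case: u su {ux} => [i|] /= su; case: v sv {vx} => [j|] /= sv; rewrite ?su ?sv.
    * move/eq => h; congr Some; apply: ord_inj; rewrite (oh i su) (oh j sv).
      have := ilt i; have := ilt j; have := h; lia.
    * move/eq => h; have := ilt i; have := h; lia.
    * move/eq => h; have := ilt j; have := h; lia.
    * done.
  + by move: (dis _ _ (fX u su) (fY v sv)); rewrite e eqxx.
  + by move: (dis _ _ (fX v sv) (fY u su)); rewrite e eqxx.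
  + have eq : forall a b, a < #|Y| -> b < #|Y| -> nth x0 ys a = nth x0 ys b -> a = b.
      move=> a b al bl /eqP; rewrite nth_uniq ?sys ?enum_uniq //; by move/eqP.
    move: e; case: u su => [i|] //= su; case: v sv => [j|] //= sv.
    rewrite (negbTE su) (negbTE sv) => /eq h; congr Some; apply: ord_inj.
    rewrite (eh i su) (eh j sv); have := ilt i; have := ilt j; have := h; lia.
- have edge_side : forall u v, jahangir_rel s m u v -> side u != side v.
    have oddj : forall j : 'I_(s * m), s %| j -> ~~ odd j.
      by move=> j sj; rewrite -dvdn2; apply: dvdn_trans sj.
    have cyc : forall i j : 'I_(s * m), val j = (i.+1 %% (s * m)) -> odd i != odd j.
      move=> i j ->; have il := ltn_ord i; case: (ltngtP i.+1 (s * m)) => h.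
      + by rewrite modn_small //=; case: (odd i).
      + lia.
      + rewrite h modnn /=; have : odd i.+1 = false by rewrite h smk odd_double.
        by rewrite oddS; case: (odd i).
    case=> [i|] [j|] //=.
    + case/orP => /eqP h; first exact: cyc.
      by rewrite eq_sym; apply: cyc.
    + by move/oddj; case: (odd i).
    + by move/oddj; case: (odd j).
  move=> u v /edge_side; rewrite /complement.
  case: (boolP (side u)) => su; case: (boolP (side v)) => sv //= _.
  + by rewrite (dis _ _ (fX u su) (fY v sv)) (nXY _ _ (fX u su) (fY v sv)).
  + rewrite eq_sym (dis _ _ (fX v sv) (fY u su)) Fsym.
    exact: (nXY _ _ (fX v sv) (fY u su)).
Qed.

Lemma upper (r t n k : nat) (F : rel 'I_r) : symmetric F -> irreflexive F ->
  3 <= k -> (k - 1) * (4 * k - 1) + 1 <= n -> t * n + k - 1 <= r ->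
  contains_subgraph F (tPn_rel t n) \/ XY F k.
Proof.
move=> Fsym Firr k3 hn hr.
have r0 : 0 < r by lia.
pose v0 : 'I_r := Ordinal r0.
pose MP j (G : nat -> nat -> 'I_r) :=
  (forall i, i < j -> ispath F setT (G i) n) /\
  (forall i i' a b, i < j -> i' < j -> a < n -> b < n -> G i a = G i' b -> i = i').
have claim : forall j, j <= t -> (exists G, MP j G) \/ XY F k.
  elim=> [|j IH] jt.
    by left; exists (fun _ _ => v0); split => i; rewrite ?ltn0.
  case: (IH (ltnW jt)) => [[G [Gp Gd]] | xy]; last by right.
  pose Img := [set G p.1 p.2 | p : 'I_j * 'I_n].
  have cI : #|Img| <= j * n.
    apply: leq_trans (leq_imset_card _ _) _; by rewrite card_prod !card_ord.
  have cD : n + k - 1 <= #|~: Img|.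
    have := cardsC Img; rewrite card_ord.
    have : j.+1 * n <= t * n by rewrite leq_mul2r jt orbT.
    rewrite mulSn.
    lia.
  case: (core Fsym Firr k3 hn cD) => [[g [g1 [g2 g3]]] | xy]; last by right.
  left; exists (fun i a => if i == j then g a else G i a); split.
  + move=> i ij; case: eqP => [_|ne].
    * split; [|split] => //; by move=> a _; rewrite inE.
    * apply: Gp; lia.
  + move=> i i' a b ij i'j an bn; case: eqP => ei; case: eqP => ei'.
    * by rewrite ei ei'.
    * move=> e; have := g1 a an; rewrite inE e => /negP; case.
      by apply/imsetP; exists (Ordinal (ltac:(lia) : i' < j), Ordinal bn).
    * move=> e; have := g1 b bn; rewrite inE -e => /negP; case.
      by apply/imsetP; exists (Ordinal (ltac:(lia) : i < j), Ordinal an).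
    * apply: Gd; lia.
case: (claim t (leqnn t)) => [[G [Gp Gd]] | xy]; last by right.
left; exists (fun p : 'I_t * 'I_n => G p.1 p.2); split.
- move=> [i a] [i' b] /= e.
  have ei := Gd _ _ _ _ (ltn_ord i) (ltn_ord i') (ltn_ord a) (ltn_ord b) e.
  have ii : i = i' by apply: ord_inj.
  subst i'; have [_ [H2 _]] := Gp _ (ltn_ord i).
  have := H2 _ _ (ltn_ord a) (ltn_ord b) e => ab.
  by have -> : a = b by apply: ord_inj.
- move=> [i a] [i' b]; rewrite /tPn_rel /= => /andP [/eqP ii /orP [/eqP ab | /eqP ba]].
  + subst i'; have [_ [_ H3]] := Gp _ (ltn_ord i).
    rewrite -ab; apply: H3; rewrite ab; exact: ltn_ord.
  + subst i'; have [_ [_ H3]] := Gp _ (ltn_ord i).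
    rewrite Fsym -ba; apply: H3; rewrite ba; exact: ltn_ord.
Qed.

Lemma inj_range (T : finType) N (h : T -> 'I_N) lo hi : injective h ->
  (forall x, lo <= h x < hi) -> #|T| <= hi - lo.
Proof.
move=> hinj hr.
have lt : forall x, h x - lo < hi - lo by move=> x; have := hr x; lia.
pose g (x : T) : 'I_(hi - lo) := Ordinal (lt x).
have ginj : injective g.
  move=> x y /(congr1 val) /= e; apply: hinj; apply: ord_inj.
  have := hr x; have := hr y; lia.
by have := leq_card g ginj; rewrite card_ord.
Qed.

Lemma lower (N t n k s m : nat) : 1 <= t -> 1 <= k -> k - 1 < n -> N <= t * n + k - 2 ->
  s * m = k.*2 -> ~ ramsey_prop (tPn_rel t n) (jahangir_rel s m) N.
Proof.
move=> t1 k1 kn hN smk rp.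
pose c := t * n - 1.
pose F := fun x y : 'I_N => (x != y) && ((x < c) == (y < c)).
have tn1 : 1 <= t * n by nia.
have Nc : N - c <= k - 1 by lia.
have n0 : 0 < n by lia.
case: (rp F).
- split.
  + by move=> x y; rewrite /F eq_sym; congr (_ && _); rewrite eq_sym.
  + by move=> x; rewrite /F eqxx.
- move=> [f [finj fe]].
  have sideeq : forall (i : 'I_t) a (ha : a < n),
      (f (i, Ordinal ha) < c) = (f (i, Ordinal n0) < c).
    move=> i; elim=> [|a IH] ha.
      by have -> : Ordinal ha = Ordinal n0 by apply: ord_inj.
    have ha' : a < n by lia.
    rewrite -(IH ha').
    have := fe (i, Ordinal ha') (i, Ordinal ha).
    rewrite /tPn_rel /= eqxx /= eqxx /= => /(_ isT) /andP [_ /eqP] <-; done.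
  case: (classic (exists i : 'I_t, ~~ (f (i, Ordinal n0) < c))) => [[i ni] | alla].
  + suff : #|'I_n| <= N - c by rewrite card_ord; lia.
    apply: (@inj_range _ _ (fun a : 'I_n => f (i, a))).
    * by move=> a b /finj [].
    * move=> a; rewrite ltn_ord andbT; have := sideeq i a (ltn_ord a).
      have -> : Ordinal (ltn_ord a) = a by apply: ord_inj.
      by move=> e; move: ni; rewrite -e -leqNgt.
  + suff : #|{: 'I_t * 'I_n}| <= c - 0 by rewrite card_prod !card_ord; lia.
    apply: (@inj_range _ _ f) => //.
    * move=> [i a] /=; have := sideeq i a (ltn_ord a).
      have -> : Ordinal (ltn_ord a) = a by apply: ord_inj.
      move=> ->; case: (boolP (f (i, Ordinal n0) < c)) => // h.
      exfalso; apply: alla; by exists i.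
- move=> [f [finj fe]].
  have dif : forall u v, jahangir_rel s m u v -> (f u < c) != (f v < c).
    move=> u v /fe; rewrite /complement /F => /andP [ne]; by rewrite ne.
  have sm0 : 0 < s * m by lia.
  have sideeq : forall i (hi : i < s * m),
      (f (Some (Ordinal hi)) < c) = (f (Some (Ordinal sm0)) < c) (+) odd i.
    elim=> [|i IH] hi.
      have -> : Ordinal hi = Ordinal sm0 by apply: ord_inj.
      by rewrite /= addbF.
    have hi' : i < s * m by lia.
    have := dif (Some (Ordinal hi')) (Some (Ordinal hi)).
    rewrite /jahangir_rel /= modn_small // eqxx /= => /(_ isT).
    rewrite (IH hi') /=; case: (f (Some (Ordinal hi)) < c); case: (f _ < c); case: (odd i) => //.
  pose b := f (Some (Ordinal sm0)) < c.
  have lt : forall a : 'I_k, (a : nat).*2 + b < s * m by move=> a; have := ltn_ord a; lia.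
  suff : #|'I_k| <= N - c by rewrite card_ord; lia.
  apply: (@inj_range _ _ (fun a : 'I_k => f (Some (Ordinal (lt a))))).
  * move=> a a' /finj [] e; apply: ord_inj; lia.
  * move=> a; rewrite ltn_ord andbT leqNgt sideeq -/b oddD odd_double /=.
    by rewrite oddb; case: (b).
Qed.

Theorem theorem3 (s m t n : nat) :
  2 <= s -> ~~ odd s -> 3 <= m -> 1 <= t ->
  ((s * m) %/ 2 - 1) * (2 * s * m - 1) + 1 <= n ->
  is_ramsey_number (tPn_rel t n) (jahangir_rel s m) (t * n + (s * m) %/ 2 - 1).
Proof.
move=> s2 se m3 t1 hn.
set k := (s * m) %/ 2.
have s2d : 2 %| s by rewrite dvdn2.
have smk : s * m = k.*2.
  by rewrite /k -muln2 divnK //; apply: dvdn_mulr.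
have k3 : 3 <= k by have := leq_mul s2 m3; lia.
have hn' : (k - 1) * (4 * k - 1) + 1 <= n.
  by have -> : 4 * k = 2 * s * m by rewrite -mulnA smk; lia.
split.
- move=> F [Fsym Firr].
  case: (upper Fsym Firr k3 hn' (leqnn _)) => [h|xy]; [left|right] => //.
  exact: J_embed Fsym s2d smk xy.
- move=> N hN; apply: (lower t1 _ _ _ smk); lia.
Qed.
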